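(* For each integer $d\ge 2$ define $$\alpha_d \;=\; \inf_{-\frac{1}{d-1}\le \gamma<\frac{1}{d+1}} \frac{1-\frac{F^*(d^2-1,\gamma)}{(d-1)^2}}{1-(d+1)\gamma}.$$ Then (i) $\alpha_d>\frac12\left(1-\frac1d\right)$ for every integer $d\ge 2$, and (ii) $\alpha_d-\frac12\left(1-\frac1d\right)\sim \frac{1}{2d^3}$ as $d\to\infty$, i.e. $\lim_{d\to\infty} 2d^3\left(\alpha_d-\frac12(1-\frac1d)\right)=1$.
   Context: For an integer $k\ge1$ and $\gamma\in[-1,1]$, $$F^*(k,\gamma)=\frac{2\gamma}{k}\left(\frac{\Gamma((k+1)/2)}{\Gamma(k/2)}\right)^2 {}_2F_1\!\left(\tfrac12,\tfrac12;\tfrac k2+1;\gamma^2\right),$$ where ${}_2F_1(a,b;c;z)=\sum_{n\ge0}\frac{(a)_n(b)_n}{(c)_n}\frac{z^n}{n!}$ is the Gaussian hypergeometric function and $(x)_n=\prod_{j=0}^{n-1}(x+j)$. (Equivalently, $F^*(k,\gamma)=\mathbb E\left\langle \frac{Zu}{\|Zu\|},\frac{Zv}{\|Zv\|}\right\rangle$ for unit vectors $u,v$ with $\langle u,v\rangle=\gamma$ and $Z$ a $k\times n$ matrix with i.i.d. standard Gaussian entries.) *)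

(* Defs.v *)
From Stdlib Require Import Reals.
From Coquelicot Require Import Coquelicot.
Open Scope R_scope.

Definition Gamma (x : R) : R :=
  RInt_gen (fun t => Rpower t (x - 1) * exp (- t))
           (at_right 0) (Rbar_locally p_infty).

Fixpoint poch (x : R) (n : nat) : R :=
  match n with
  | O => 1
  | S m => poch x m * (x + INR m)
  end.

Definition hyp2F1 (a b c z : R) : R :=
  Series (fun n => poch a n * poch b n / poch c n * z ^ n / INR (Factorial.fact n)).

Definition Fstar (k : nat) (g : R) : R :=
  2 * g / INR k * (Gamma ((INR k + 1) / 2) / Gamma (INR k / 2)) ^ 2
    * hyp2F1 (1/2) (1/2) (INR k / 2 + 1) (g ^ 2).

Definition alpha (d : nat) : Rbar :=
  let D := INR d in
  Glb_Rbar (fun y => exists g : R,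
     - (1 / (D - 1)) <= g /\ g < 1 / (D + 1) /\
     y = (1 - Fstar (d * d - 1) g / (D - 1) ^ 2) / (1 - (D + 1) * g)).

(* Main.v *)
Require Import Defs.
From Stdlib Require Import Reals Lra Psatz.
From Coquelicot Require Import Coquelicot.
Open Scope R_scope.

Lemma poch_pos x n : 0 < x -> 0 < poch x n.
Proof. intros Hx; induction n; simpl; [lra|]. apply Rmult_lt_0_compat; auto. pose proof (pos_INR n); lra. Qed.

Lemma poch_le x y n : 0 < x <= y -> poch x n <= poch y n.
Proof. intros Hxy; induction n; simpl; [lra|].
  pose proof (pos_INR n). pose proof (poch_pos x n ltac:(lra)).
  apply Rmult_le_compat; lra. Qed.

Lemma poch_1 n : poch 1 n = INR (Factorial.fact n).
Proof. induction n; simpl poch; [simpl; lra|]. rewrite IHn.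
  change (Factorial.fact (S n)) with (S n * Factorial.fact n)%nat.
  rewrite mult_INR, S_INR. ring. Qed.

Lemma poch_half_52 n : poch (1/2) n * (4 * (INR n + 1/2) * (INR n + 3/2)) = 3 * poch (5/2) n.
Proof. induction n; simpl poch; [simpl; lra|]. rewrite S_INR.
  replace (poch (1 / 2) n * (1 / 2 + INR n) * (4 * (INR n + 1 + 1 / 2) * (INR n + 1 + 3 / 2)))
   with (poch (1 / 2) n * (4 * (INR n + 1 / 2) * (INR n + 3 / 2)) * (INR n + 5/2)) by field.
  rewrite IHn. ring. Qed.

Definition hterm c z n := poch (1/2) n * poch (1/2) n / poch c n * z ^ n / INR (Factorial.fact n).

Lemma hterm_nonneg c z n : 0 < c -> 0 <= z -> 0 <= hterm c z n.
Proof. intros Hc Hz. unfold hterm.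
  pose proof (poch_pos (1/2) n ltac:(lra)). pose proof (poch_pos c n Hc).
  pose proof (INR_fact_lt_0 n). pose proof (pow_le z n Hz).
  unfold Rdiv. repeat apply Rmult_le_pos; try lra; left; apply Rinv_0_lt_compat; lra. Qed.

Lemma hterm_le_geom c z n : 1 <= c -> 0 <= z -> hterm c z n <= z ^ n.
Proof. intros Hc Hz. unfold hterm.
  pose proof (poch_pos (1/2) n ltac:(lra)). pose proof (poch_pos c n ltac:(lra)).
  pose proof (INR_fact_lt_0 n). pose proof (pow_le z n Hz).
  pose proof (poch_le (1/2) c n ltac:(lra)).
  pose proof (poch_le (1/2) 1 n ltac:(lra)). rewrite poch_1 in H4.
  set (p := poch (1/2) n) in *. set (q := poch c n) in *. set (f := INR (Factorial.fact n)) in *.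
  assert (p / q <= 1). { apply Rmult_le_reg_r with q; auto. unfold Rdiv; rewrite Rmult_assoc, Rinv_l; lra. }
  assert (p / f <= 1). { apply Rmult_le_reg_r with f; auto. unfold Rdiv; rewrite Rmult_assoc, Rinv_l; lra. }
  assert (0 <= p / q) by (unfold Rdiv; apply Rmult_le_pos; [lra| left; apply Rinv_0_lt_compat; lra]).
  assert (0 <= p / f) by (unfold Rdiv; apply Rmult_le_pos; [lra| left; apply Rinv_0_lt_compat; lra]).
  replace (p * p / q * z ^ n / f) with ((p / q) * (p / f) * z ^ n) by (field; lra).
  replace (z ^ n) with (1 * 1 * z ^ n) at 2 by ring.
  apply Rmult_le_compat_r; auto. apply Rmult_le_compat; lra. Qed.

Definition tel n := 3/4 * (/ (INR n + 1/2) - / (INR n + 3/2)).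

Lemma hterm_le_tel c z n : 5/2 <= c -> 0 <= z <= 1 -> hterm c z n <= tel n.
Proof. intros Hc Hz. unfold hterm, tel.
  pose proof (poch_pos (1/2) n ltac:(lra)). pose proof (poch_pos c n ltac:(lra)).
  pose proof (poch_pos (5/2) n ltac:(lra)).
  pose proof (INR_fact_lt_0 n). pose proof (pow_le z n (proj1 Hz)).
  assert (z ^ n <= 1) by (rewrite <- (pow1 n); apply pow_incr; lra).
  pose proof (poch_le (5/2) c n ltac:(lra)).
  pose proof (poch_le (1/2) 1 n ltac:(lra)). rewrite poch_1 in H6.
  pose proof (poch_half_52 n). pose proof (pos_INR n).
  set (p := poch (1/2) n) in *. set (q := poch c n) in *. set (f := INR (Factorial.fact n)) in *.
  set (r := poch (5/2) n) in *.
  replace (3 / 4 * (/ (INR n + 1 / 2) - / (INR n + 3 / 2))) with (p / r).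
  2:{ apply Rmult_eq_reg_r with (r * (4 * (INR n + 1 / 2) * (INR n + 3 / 2))).
      2:{ apply Rmult_integral_contrapositive; split; [lra|]. nra. }
      replace (p / r * (r * (4 * (INR n + 1 / 2) * (INR n + 3 / 2)))) with (p * (4 * (INR n + 1 / 2) * (INR n + 3 / 2))) by (field; lra).
      rewrite H7. field. lra. }
  assert (p / f <= 1). { apply Rmult_le_reg_r with f; auto. unfold Rdiv; rewrite Rmult_assoc, Rinv_l; lra. }
  assert (0 <= p / f) by (unfold Rdiv; apply Rmult_le_pos; [lra| left; apply Rinv_0_lt_compat; lra]).
  assert (p / q <= p / r). { unfold Rdiv. apply Rmult_le_compat_l; [lra|]. apply Rinv_le_contravar; lra. }
  assert (0 <= p / q) by (unfold Rdiv; apply Rmult_le_pos; [lra| left; apply Rinv_0_lt_compat; lra]).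
  replace (p * p / q * z ^ n / f) with ((p / q) * ((p / f) * z ^ n)) by (field; lra).
  assert (0 <= p / f * z ^ n <= 1) by (split; [apply Rmult_le_pos|]; nra).
  nra. Qed.

Lemma sum_tel N : sum_n tel N = 3/4 * (2 - / (INR N + 3/2)).
Proof. induction N.
  - rewrite sum_O. unfold tel. simpl. field.
  - rewrite sum_Sn, IHN. unfold tel. rewrite !S_INR. unfold plus; simpl.
    pose proof (pos_INR N). field. lra. Qed.

Lemma ex_series_tel : ex_series tel.
Proof.
  exists (3/4 * 2).
  change (is_lim_seq (sum_n tel) (3/4*2)).
  apply is_lim_seq_ext with (fun N => 3/4 * (2 - / (INR N + 3/2))).
  { intros; rewrite sum_tel; auto. }
  replace (3/4*2) with (3/4 * (2 - 0)) by ring.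
  apply (is_lim_seq_scal_l _ (3/4) (2-0)).
  apply (is_lim_seq_minus' (fun _ => 2) (fun N => / (INR N + 3/2)) 2 0).
  apply is_lim_seq_const.
  change (is_lim_seq (fun N => / (INR N + 3/2)) (Rbar_inv p_infty)).
  apply is_lim_seq_inv; [|discriminate].
  eapply is_lim_seq_le_p_loc. 2: apply is_lim_seq_INR.
  exists 0%nat; intros; lra.
Qed.

Lemma Series_ge0 (a : nat -> R) : (forall n, 0 <= a n) -> ex_series a -> 0 <= Series a.
Proof. intros Ha He.
  assert (Series (fun _ => 0) = 0).
  { unfold Series. rewrite (Lim_seq_ext _ (fun _ => 0)). rewrite Lim_seq_const; auto.
    intros n; rewrite sum_n_const; ring. }
  rewrite <- H. apply Series_le; auto. intros; split; [lra|auto]. Qed.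

Lemma Series_ge_first (a : nat -> R) : (forall n, 0 <= a n) -> ex_series a -> a 0%nat <= Series a.
Proof. intros Ha He. rewrite Series_incr_1; auto.
  assert (0 <= Series (fun k => a (S k))); [|lra].
  apply Series_ge0; auto. apply ex_series_incr_1 in He; auto. Qed.

Lemma hyp_eq c z : hyp2F1 (1/2) (1/2) c z = Series (hterm c z).
Proof. reflexivity. Qed.

Lemma hterm_0 c z : hterm c z 0 = 1.
Proof. unfold hterm; simpl. field. Qed.

Lemma hterm_ex c z : 5/2 <= c -> 0 <= z <= 1 -> ex_series (hterm c z).
Proof. intros Hc Hz.
  apply (ex_series_le (K:=R_AbsRing) (V:=R_CompleteNormedModule)) with tel; auto using ex_series_tel.
  intros n. unfold norm; simpl. rewrite Rabs_pos_eq. apply hterm_le_tel; auto.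
  apply hterm_nonneg; lra. Qed.

Lemma hyp_lower (c z : R) : 5/2 <= c -> 0 <= z <= 1 -> 1 <= hyp2F1 (1/2) (1/2) c z.
Proof. intros Hc Hz. rewrite hyp_eq, <- (hterm_0 c z).
  apply Series_ge_first. intros; apply hterm_nonneg; lra.
  apply hterm_ex; auto. Qed.

Lemma hyp_upper (c z : R) : 5/2 <= c -> 0 <= z < 1 -> hyp2F1 (1/2) (1/2) c z <= / (1 - z).
Proof. intros Hc Hz. rewrite hyp_eq.
  rewrite <- (is_series_unique _ _ (is_series_geom z ltac:(rewrite Rabs_pos_eq; lra))).
  apply Series_le. intros n; split. apply hterm_nonneg; lra. apply hterm_le_geom; lra.
  apply ex_series_geom. rewrite Rabs_pos_eq; lra. Qed.

Definition gi (x t : R) := Rpower t (x - 1) * exp (- t).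

Lemma Rpower_derive y t : 0 < t -> is_derive (fun u => Rpower u y) t (y * Rpower t (y - 1)).
Proof. intros Ht. apply is_derive_Reals, derivable_pt_lim_power; auto. Qed.

Lemma Rpower_cont y t : 0 < t -> continuous (fun u => Rpower u y) t.
Proof. intros Ht. apply (ex_derive_continuous (K:=R_AbsRing) (V:=R_NormedModule)). eexists; apply Rpower_derive; auto. Qed.

Lemma gi_cont x t : 0 < t -> continuous (gi x) t.
Proof. intros Ht. unfold gi.
  apply (continuous_mult (fun u => Rpower u (x-1)) (fun u => exp (-u))).
  apply Rpower_cont; auto.
  apply (ex_derive_continuous (K:=R_AbsRing) (V:=R_NormedModule)). auto_derive; auto. Qed.

Lemma gi_pos x t : 0 < t -> 0 < gi x t.
Proof. intros; unfold gi, Rpower. apply Rmult_lt_0_compat; apply exp_pos. Qed.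

Lemma gi_exRInt x a b : 0 < a -> a <= b -> ex_RInt (gi x) a b.
Proof. intros Ha Hab. apply (ex_RInt_continuous (V:=R_CompleteNormedModule)). intros z Hz.
  apply gi_cont. rewrite Rmin_left in Hz; lra. Qed.

Lemma ln_le_sub1 u : 0 < u -> ln u <= u - 1.
Proof. intros Hu. destruct (Req_dec (u - 1) 0).
  - replace u with 1 by lra. rewrite ln_1; lra.
  - pose proof (exp_ineq1 (u-1) H). rewrite <- (ln_exp (u - 1)).
    apply ln_le; lra. Qed.

Lemma exp_le' a b : a <= b -> exp a <= exp b.
Proof. intros [H|H]; [left; apply exp_increasing; auto| subst; lra]. Qed.

Lemma Rpower_1_base y : Rpower 1 y = 1.
Proof. unfold Rpower; rewrite ln_1, Rmult_0_r; apply exp_0. Qed.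

Lemma growth y t : 1 <= t -> Rpower t y * exp (- t) <= exp (4 * y ^ 2) * exp (- t / 2).
Proof. intros Ht. unfold Rpower. rewrite <- !exp_plus. apply exp_le'.
  assert (Hl0 : 0 <= ln t) by (rewrite <- ln_1; apply ln_le; lra).
  assert (Hs : ln t <= 2 * sqrt t).
  { assert (0 < sqrt t) by (apply sqrt_lt_R0; lra).
    pose proof (ln_le_sub1 (sqrt t) H).
    assert (ln t = 2 * ln (sqrt t)).
    { rewrite <- (sqrt_sqrt t) at 1 by lra. rewrite ln_mult by lra. ring. }
    lra. }
  assert (Hss : sqrt t * sqrt t = t) by (apply sqrt_sqrt; lra).
  assert (y * ln t <= Rabs y * ln t).
  { apply Rmult_le_compat_r; auto. apply Rle_abs. }
  assert (Rabs y * ln t <= Rabs y * (2 * sqrt t)) by (apply Rmult_le_compat_l; auto; apply Rabs_pos).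
  assert (Ry : Rabs y ^ 2 = y ^ 2) by apply pow2_abs.
  assert (0 <= (2 * Rabs y - sqrt t / 2) ^ 2) by apply pow2_ge_0.
  nra. Qed.

Lemma RInt_gi_mono x a' a b b' : 0 < a' -> a' <= a -> a <= b -> b <= b' ->
  RInt (gi x) a b <= RInt (gi x) a' b'.
Proof. intros H1 H2 H3 H4.
  rewrite <- (RInt_Chasles (gi x) a' a b') by (apply gi_exRInt; lra).
  rewrite <- (RInt_Chasles (gi x) a b b') by (apply gi_exRInt; lra).
  unfold plus; simpl.
  assert (0 <= RInt (gi x) a' a) by (apply RInt_ge_0; auto; [apply gi_exRInt; lra| intros; left; apply gi_pos; lra]).
  assert (0 <= RInt (gi x) b b') by (apply RInt_ge_0; auto; [apply gi_exRInt; lra| intros; left; apply gi_pos; lra]).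
  lra. Qed.

Lemma RInt_gi_01 x a : 0 < x -> 0 < a <= 1 -> RInt (gi x) a 1 <= / x.
Proof. intros Hx Ha.
  assert (Hd : forall t, Rmin a 1 <= t <= Rmax a 1 ->
     is_derive (fun u => / x * Rpower u x) t (Rpower t (x - 1))).
  { intros t Ht. rewrite Rmin_left, Rmax_right in Ht by lra.
    pose proof (is_derive_scal (fun u => Rpower u x) t (/x) _ (Rpower_derive x t ltac:(lra))).
    eapply is_derive_ext. intros; reflexivity.
    replace (Rpower t (x - 1)) with (scal (/x) (x * Rpower t (x - 1))); auto.
    unfold scal; simpl; unfold mult; simpl. field. lra. }
  assert (Hc : forall t, Rmin a 1 <= t <= Rmax a 1 -> continuous (fun u => Rpower u (x - 1)) t).
  { intros t Ht. rewrite Rmin_left, Rmax_right in Ht by lra. apply Rpower_cont; lra. }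
  pose proof (is_RInt_derive _ _ a 1 Hd Hc) as HI.
  apply Rle_trans with (RInt (fun u => Rpower u (x - 1)) a 1).
  - apply RInt_le; try lra. apply gi_exRInt; lra. eexists; eauto.
    intros t Ht. unfold gi. assert (0 < Rpower t (x-1)) by apply exp_pos.
    assert (exp (-t) <= 1) by (rewrite <- exp_0; apply exp_le'; lra). nra.
  - rewrite (is_RInt_unique _ _ _ _ HI). unfold minus, plus, opp; simpl.
    rewrite Rpower_1_base. assert (0 < Rpower a x) by apply exp_pos.
    assert (0 < / x) by (apply Rinv_0_lt_compat; lra). nra. Qed.

Lemma RInt_gi_1b x b : 1 <= b -> RInt (gi x) 1 b <= 2 * exp (4 * (x - 1) ^ 2).
Proof. intros Hb. set (C := exp (4 * (x - 1) ^ 2)).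
  assert (HC : 0 < C) by apply exp_pos.
  assert (Hd : forall t, Rmin 1 b <= t <= Rmax 1 b ->
     is_derive (fun u => - 2 * C * exp (- u / 2)) t (C * exp (- t / 2))).
  { intros t Ht. auto_derive; auto. unfold Rdiv; field. }
  assert (Hc : forall t, Rmin 1 b <= t <= Rmax 1 b -> continuous (fun u => C * exp (- u / 2)) t).
  { intros t Ht. apply (ex_derive_continuous (K:=R_AbsRing) (V:=R_NormedModule)). auto_derive; auto. }
  pose proof (is_RInt_derive _ _ 1 b Hd Hc) as HI.
  apply Rle_trans with (RInt (fun u => C * exp (- u / 2)) 1 b).
  - apply RInt_le; try lra. apply gi_exRInt; lra. eexists; eauto.
    intros t Ht. apply growth; lra.
  - rewrite (is_RInt_unique _ _ _ _ HI). unfold minus, plus, opp; simpl.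
    assert (0 < exp (- b / 2)) by apply exp_pos.
    assert (exp (- (1) / 2) <= 1) by (apply Rle_trans with (exp 0); [apply exp_le'; lra | rewrite exp_0; lra]).
    assert (0 < C * exp (- b / 2)) by (apply Rmult_lt_0_compat; auto).
    assert (C * exp (- (1) / 2) <= C * 1) by (apply Rmult_le_compat_l; lra).
    replace (-2 * C * exp (- b / 2) + - (-2 * C * exp (- (1) / 2))) with
      (2 * (C * exp (- (1) / 2)) - 2 * (C * exp (- b / 2))) by ring. lra. Qed.

Lemma RInt_gi_bound x : 0 < x -> exists M, forall a b, 0 < a -> a <= b -> RInt (gi x) a b <= M.
Proof. intros Hx. exists (/ x + 2 * exp (4 * (x - 1) ^ 2)). intros a b Ha Hab.
  apply Rle_trans with (RInt (gi x) (Rmin a 1) (Rmax b 1)).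
  { apply RInt_gi_mono. apply Rmin_glb_lt; lra. apply Rmin_l. auto. apply Rmax_l. }
  rewrite <- (RInt_Chasles (gi x) (Rmin a 1) 1 (Rmax b 1)).
  2,3: apply gi_exRInt; [try (apply Rmin_glb_lt; lra); lra | try apply Rmin_r; apply Rmax_r].
  unfold plus; simpl. apply Rplus_le_compat.
  apply RInt_gi_01; auto. split. apply Rmin_glb_lt; lra. apply Rmin_r.
  apply RInt_gi_1b. apply Rmax_r. Qed.

Lemma gi_gen x : 0 < x -> exists S,
  is_RInt_gen (gi x) (at_right 0) (Rbar_locally p_infty) S /\ RInt (gi x) 1 2 <= S.
Proof. intros Hx.
  set (E := fun y => exists a b, 0 < a /\ a <= b /\ y = RInt (gi x) a b).
  destruct (RInt_gi_bound x Hx) as [M HM].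
  assert (HB : bound E). { exists M. intros y [a [b [Ha [Hab ->]]]]. auto. }
  assert (HE : exists y, E y). { exists (RInt (gi x) 1 2), 1, 2. repeat split; lra. }
  destruct (completeness E HB HE) as [S [HS1 HS2]].
  exists S. split.
  2:{ apply HS1. exists 1, 2. repeat split; lra. }
  intros P [eps HP].
  assert (Hex : exists a0 b0, 0 < a0 /\ a0 <= b0 /\ S - eps < RInt (gi x) a0 b0).
  { destruct (Classical_Prop.classic (exists a0 b0, 0 < a0 /\ a0 <= b0 /\ S - eps < RInt (gi x) a0 b0)) as [H|H]; auto.
    exfalso. assert (S <= S - eps). 2:{ pose proof (cond_pos eps); lra. }
    apply HS2. intros y [a [b [Ha [Hab ->]]]].
    apply Rnot_lt_le. intros Hc. apply H. exists a, b. auto. }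
  destruct Hex as [a0 [b0 [Ha0 [Hab0 Hlt]]]].
  apply (Filter_prod _ _ _ (fun a => 0 < a <= a0) (fun b => b0 <= b)).
  - exists (mkposreal a0 Ha0). intros y Hy Hy0. split; auto.
    unfold ball in Hy; simpl in Hy; unfold AbsRing_ball, abs, minus, plus, opp in Hy; simpl in Hy.
    rewrite Ropp_0, Rplus_0_r in Hy. apply Rabs_def2 in Hy. simpl in Hy. lra.
  - exists b0. intros; lra.
  - intros a b [Ha1 Ha2] Hb. simpl. exists (RInt (gi x) a b). split.
    + apply (RInt_correct (V:=R_CompleteNormedModule)). apply gi_exRInt; lra.
    + apply HP. assert (RInt (gi x) a b <= S) by (apply HS1; exists a, b; repeat split; lra).
      assert (RInt (gi x) a0 b0 <= RInt (gi x) a b) by (apply RInt_gi_mono; lra).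
      unfold ball; simpl; unfold AbsRing_ball, abs, minus, plus, opp; simpl.
      apply Rabs_def1; lra.
Qed.

Lemma Gamma_is x : 0 < x ->
  is_RInt_gen (gi x) (at_right 0) (Rbar_locally p_infty) (Gamma x) /\ 0 < Gamma x.
Proof. intros Hx. destruct (gi_gen x Hx) as [S [HS HS2]].
  assert (HG : Gamma x = S).
  { unfold Gamma. apply (is_RInt_gen_unique (V:=R_CompleteNormedModule)). exact HS. }
  rewrite HG. split; auto.
  eapply Rlt_le_trans; [|exact HS2].
  assert (RInt (fun _ => 0) 1 2 < RInt (gi x) 1 2).
  { apply RInt_lt. lra. intros; apply gi_cont; lra. intros; apply continuous_const.
    intros; apply gi_pos; lra. }
  rewrite RInt_const in H. unfold scal in H; simpl in H; unfold mult in H; simpl in H. lra.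
Qed.

Definition hh x t := - (Rpower t x * exp (- t)).

Lemma hh_derive x t : 0 < t ->
  is_derive (hh x) t (gi (x + 1) t - x * gi x t).
Proof. intros Ht.
  assert (H1 := Rpower_derive x t Ht).
  assert (H2 : is_derive (fun u => exp (- u)) t (- exp (- t))).
  { auto_derive; auto. ring. }
  assert (H3 := is_derive_mult _ _ _ _ _ H1 H2 ltac:(intros; apply Rmult_comm)).
  assert (H4 := is_derive_opp _ _ _ H3).
  unfold hh. eapply is_derive_ext; [intros; reflexivity|].
  replace (gi (x + 1) t - x * gi x t) with
    (opp (plus (mult (x * Rpower t (x - 1)) (exp (- t))) (mult (Rpower t x) (- exp (- t))))).
  exact H4.
  unfold gi. replace (x + 1 - 1) with x by ring.
  unfold opp, plus, mult; simpl. ring.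
Qed.

Lemma hh_lim0 x : 0 < x -> filterlim (hh x) (at_right 0) (locally 0).
Proof. intros Hx P [eps HP].
  assert (Hd : 0 < Rpower eps (/ x)) by apply exp_pos.
  exists (mkposreal _ Hd). intros t Ht Ht0. apply HP.
  unfold ball in Ht; simpl in Ht; unfold AbsRing_ball, abs, minus, plus, opp in Ht; simpl in Ht.
  rewrite Ropp_0, Rplus_0_r in Ht. apply Rabs_def2 in Ht.
  unfold ball; simpl; unfold AbsRing_ball, abs, minus, plus, opp; simpl.
  rewrite Ropp_0, Rplus_0_r. unfold hh. rewrite Rabs_Ropp.
  assert (0 < Rpower t x) by apply exp_pos.
  assert (exp (- t) <= 1) by (rewrite <- exp_0; apply exp_le'; lra).
  assert (0 < exp (- t)) by apply exp_pos.
  rewrite Rabs_pos_eq by nra.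
  assert (Rpower t x < Rpower (Rpower eps (/ x)) x) by (apply Rlt_Rpower_l; lra).
  rewrite Rpower_mult, Rinv_l, Rpower_1 in H2 by (pose proof (cond_pos eps); lra).
  nra.
Qed.

Lemma hh_liminf x : 0 < x -> filterlim (hh x) (Rbar_locally p_infty) (locally 0).
Proof. intros Hx P [eps HP].
  set (C := exp (4 * x ^ 2)).
  assert (HC : 0 < C) by apply exp_pos.
  pose proof (cond_pos eps) as He.
  exists (Rmax 1 (-2 * ln (eps / C))). intros t Ht. apply HP.
  assert (Ht1 : 1 < t) by (eapply Rle_lt_trans; [apply Rmax_l|exact Ht]).
  assert (Ht2 : -2 * ln (eps / C) < t) by (eapply Rle_lt_trans; [apply Rmax_r|exact Ht]).
  unfold ball; simpl; unfold AbsRing_ball, abs, minus, plus, opp; simpl.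
  rewrite Ropp_0, Rplus_0_r. unfold hh. rewrite Rabs_Ropp.
  assert (0 < Rpower t x) by apply exp_pos.
  assert (0 < exp (- t)) by apply exp_pos.
  rewrite Rabs_pos_eq by nra.
  pose proof (growth x t ltac:(lra)).
  assert (exp (- t / 2) < eps / C).
  { rewrite <- (exp_ln (eps / C)). apply exp_increasing. lra.
    apply Rdiv_lt_0_compat; lra. }
  assert (C * exp (- t / 2) < C * (eps / C)) by (apply Rmult_lt_compat_l; lra).
  replace (C * (eps / C)) with (pos eps) in H3 by (field; lra).
  unfold C in *. lra.
Qed.

Lemma Gamma_rec x : 0 < x -> Gamma (x + 1) = x * Gamma x.
Proof. intros Hx.
  destruct (Gamma_is x Hx) as [H0 _].
  destruct (Gamma_is (x + 1) ltac:(lra)) as [H1 _].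
  assert (HD : is_RInt_gen (Derive (hh x)) (at_right 0) (Rbar_locally p_infty) (0 - 0)).
  { apply is_RInt_gen_Derive.
    - apply (Filter_prod _ _ _ (fun a => 0 < a) (fun b => 0 < b)).
      + exists (mkposreal 1 Rlt_0_1). intros; auto.
      + exists 0. auto.
      + intros a b Ha Hb t Ht. simpl in Ht. eexists. apply hh_derive.
        assert (0 < Rmin a b) by (apply Rmin_glb_lt; auto). lra.
    - apply (Filter_prod _ _ _ (fun a => 0 < a) (fun b => 0 < b)).
      + exists (mkposreal 1 Rlt_0_1). intros; auto.
      + exists 0. auto.
      + intros a b Ha Hb t Ht. simpl in Ht.
        assert (Htp : 0 < t) by (assert (0 < Rmin a b) by (apply Rmin_glb_lt; auto); lra).
        apply continuous_ext_loc with (fun u => gi (x + 1) u - x * gi x u).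
        * exists (mkposreal t Htp). intros y Hy.
          unfold ball in Hy; simpl in Hy; unfold AbsRing_ball, abs, minus, plus, opp in Hy; simpl in Hy.
          apply Rabs_def2 in Hy.
          symmetry. apply is_derive_unique, hh_derive. lra.
        * apply (continuous_minus (V:=R_NormedModule) (gi (x+1)) (fun u => x * gi x u)).
          apply gi_cont; auto.
          apply (continuous_scal_r (V:=R_NormedModule) x (gi x)). apply gi_cont; auto.
    - apply hh_lim0; auto.
    - apply hh_liminf; auto. }
  assert (HM := is_RInt_gen_minus _ _ _ _ H1 (is_RInt_gen_scal _ x _ H0)).
  assert (HD' : is_RInt_gen (fun y => minus (gi (x + 1) y) (scal x (gi x y)))
            (at_right 0) (Rbar_locally p_infty) (0 - 0)).
  { eapply is_RInt_gen_ext; [|exact HD].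
    apply (Filter_prod _ _ _ (fun a => 0 < a) (fun b => 0 < b)).
    + exists (mkposreal 1 Rlt_0_1). intros; auto.
    + exists 0. auto.
    + intros a b Ha Hb t Ht. simpl in Ht.
      assert (Htp : 0 < t) by (assert (0 < Rmin a b) by (apply Rmin_glb_lt; auto); lra).
      rewrite (is_derive_unique _ _ _ (hh_derive x t Htp)). reflexivity. }
  pose proof (is_RInt_gen_unique (V:=R_CompleteNormedModule) _ _ HM) as E1.
  pose proof (is_RInt_gen_unique (V:=R_CompleteNormedModule) _ _ HD') as E2.
  pose proof (eq_trans (eq_sym E1) E2) as E.
  unfold minus, plus, opp, scal in E; simpl in E; unfold mult in E; simpl in E.
  lra.
Qed.

Lemma Gamma_CS_lam a b l : 0 < a -> 0 < b -> 0 < l ->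
  Gamma ((a + b) / 2) <= / (2 * l) * (l ^ 2 * Gamma a + Gamma b).
Proof. intros Ha Hb Hl.
  destruct (Gamma_is a Ha) as [HA _]. destruct (Gamma_is b Hb) as [HB _].
  destruct (Gamma_is ((a + b) / 2) ltac:(lra)) as [HM _].
  assert (HG := is_RInt_gen_scal _ (/ (2 * l)) _ (is_RInt_gen_plus _ _ _ _ (is_RInt_gen_scal _ (l ^ 2) _ HA) HB)).
  pose proof (RInt_gen_norm (V:=R_CompleteNormedModule) (Fa := at_right 0) (Fb := Rbar_locally p_infty) (gi ((a + b) / 2))) as HN.
  eapply Rle_trans; [apply Rle_abs|].
  eapply HN; [ | | exact HM | exact HG].
  - apply (Filter_prod _ _ _ (fun a => 0 < a < 1) (fun b => 1 < b)).
    + exists (mkposreal 1 Rlt_0_1). intros y Hy Hy0. split; auto.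
      unfold ball in Hy; simpl in Hy; unfold AbsRing_ball, abs, minus, plus, opp in Hy; simpl in Hy.
      rewrite Ropp_0, Rplus_0_r in Hy. apply Rabs_def2 in Hy. lra.
    + exists 1. auto.
    + intros; simpl; lra.
  - apply (Filter_prod _ _ _ (fun a => 0 < a) (fun b => 0 < b)).
    + exists (mkposreal 1 Rlt_0_1). intros; auto.
    + exists 0. auto.
    + intros u v Hu Hv t Ht. simpl in Ht. assert (Ht0 : 0 < t) by lra.
      unfold norm; simpl; unfold abs; simpl.
      unfold scal, plus; simpl; unfold mult; simpl.
      unfold gi.
      set (p := Rpower t ((a - 1) / 2)). set (q := Rpower t ((b - 1) / 2)).
      assert (E1 : Rpower t (a - 1) = p * p) by (unfold p; rewrite <- Rpower_plus; f_equal; field).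
      assert (E2 : Rpower t (b - 1) = q * q) by (unfold q; rewrite <- Rpower_plus; f_equal; field).
      assert (E3 : Rpower t ((a + b) / 2 - 1) = p * q) by (unfold p, q; rewrite <- Rpower_plus; f_equal; field).
      rewrite E1, E2, E3.
      assert (0 < p) by apply exp_pos. assert (0 < q) by apply exp_pos.
      assert (0 < exp (- t)) by apply exp_pos.
      rewrite Rabs_pos_eq by (apply Rmult_le_pos; [apply Rmult_le_pos|]; lra).
      assert (0 < / (2 * l)) by (apply Rinv_0_lt_compat; lra).
      assert (Hk : 2 * l * / (2 * l) = 1) by (field; lra).
      assert (0 <= (l * p - q) ^ 2) by apply pow2_ge_0.
      set (e := exp (- t)) in *. set (w := / (2 * l)) in *.
      assert (p * q * e * (2 * l * w) <= w * (l ^ 2 * (p * p * e) + q * q * e)).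
      { assert (0 <= w * e) by nra. nra. }
      rewrite Hk in H4. lra.
Qed.

Lemma Gamma_CS a b : 0 < a -> 0 < b -> Gamma ((a + b) / 2) ^ 2 <= Gamma a * Gamma b.
Proof. intros Ha Hb.
  destruct (Gamma_is a Ha) as [_ PA]. destruct (Gamma_is b Hb) as [_ PB].
  destruct (Gamma_is ((a + b) / 2) ltac:(lra)) as [_ PM].
  set (l := Gamma ((a + b) / 2) / Gamma a).
  assert (Hl : 0 < l) by (apply Rdiv_lt_0_compat; auto).
  pose proof (Gamma_CS_lam a b l Ha Hb Hl).
  unfold l in H.
  set (M := Gamma ((a + b) / 2)) in *. set (A := Gamma a) in *. set (B := Gamma b) in *.
  replace (/ (2 * (M / A)) * ((M / A) ^ 2 * A + B)) with (M / 2 + A * B / (2 * M)) in H by (field; lra).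
  assert (M / 2 <= A * B / (2 * M)) by lra.
  apply Rmult_le_compat_r with (r := 2 * M) in H0; [|lra].
  replace (M / 2 * (2 * M)) with (M ^ 2) in H0 by field.
  replace (A * B / (2 * M) * (2 * M)) with (A * B) in H0 by (field; lra). auto.
Qed.

Definition cst (k : R) := 2 / k * (Gamma ((k + 1) / 2) / Gamma (k / 2)) ^ 2.

Lemma cst_bounds (k : R) : 1 <= k -> k / (k + 1) <= cst k <= 1.
Proof. intros Hk. set (a := k / 2).
  assert (Ha : 0 < a) by (unfold a; lra).
  destruct (Gamma_is a Ha) as [_ P0].
  destruct (Gamma_is (a + 1/2) ltac:(lra)) as [_ P1].
  pose proof (Gamma_rec a Ha) as R0.
  pose proof (Gamma_rec (a + 1/2) ltac:(lra)) as R1.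
  pose proof (Gamma_CS a (a + 1) Ha ltac:(lra)) as C1.
  pose proof (Gamma_CS (a + 1/2) (a + 1/2 + 1) ltac:(lra) ltac:(lra)) as C2.
  replace ((a + (a + 1)) / 2) with (a + 1/2) in C1 by field.
  replace ((a + 1 / 2 + (a + 1 / 2 + 1)) / 2) with (a + 1) in C2 by field.
  rewrite R0 in C1. rewrite R0, R1 in C2.
  unfold cst. replace ((k + 1) / 2) with (a + 1/2) by (unfold a; field). fold a.
  replace (2 / k) with (/ a) by (unfold a; field; lra).
  set (G0 := Gamma a) in *. set (G1 := Gamma (a + 1/2)) in *.
  replace (/ a * (G1 / G0) ^ 2) with (G1 ^ 2 / (a * G0 ^ 2)) by (field; lra).
  assert (0 < a * G0 ^ 2) by (apply Rmult_lt_0_compat; [lra| apply pow_lt; lra]).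
  split.
  - replace (k / (k + 1)) with (a / (a + 1/2)) by (unfold a; field; lra).
    apply Rmult_le_reg_r with ((a + 1/2) * (a * G0 ^ 2)). nra.
    replace (a / (a + 1 / 2) * ((a + 1 / 2) * (a * G0 ^ 2))) with ((a * G0) ^ 2) by (field; lra).
    replace (G1 ^ 2 / (a * G0 ^ 2) * ((a + 1 / 2) * (a * G0 ^ 2))) with (G1 * ((a + 1/2) * G1)) by (field; lra).
    auto.
  - apply Rmult_le_reg_r with (a * G0 ^ 2); auto.
    replace (G1 ^ 2 / (a * G0 ^ 2) * (a * G0 ^ 2)) with (G1 ^ 2) by (field; lra).
    nra.
Qed.

Lemma key_bound (D c H g : R) : 2 <= D -> 0 < c <= 1 ->
  - (1 / (D - 1)) <= g -> g < 1 / (D + 1) -> 1 <= H -> (0 <= g -> H <= / (1 - g^2)) ->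
  1/2 * (1 - 1 / D) + Rmin (1/8) (c / (2 * D * (D - 1) ^ 2))
  <= (1 - c * g * H / (D - 1) ^ 2) / (1 - (D + 1) * g).
Proof.
  intros HD Hc Hg1 Hg2 HH1 HH2.
  set (m := (D - 1) ^ 2).
  assert (Hm : 1 <= m) by (unfold m; nra).
  assert (HDn : 0 < 1 - (D + 1) * g).
  { assert (g * (D+1) < 1). { apply Rmult_lt_reg_r with (/(D+1)).
      apply Rinv_0_lt_compat; lra. rewrite Rmult_assoc, Rinv_r by lra. lra. }
    lra. }
  destruct (Rle_or_lt 0 g) as [Hg | Hg].
  -
    assert (Hg3 : g <= 1/3).
    { apply Rlt_le, Rlt_le_trans with (1 := Hg2). unfold Rdiv.
      rewrite !Rmult_1_l. apply Rinv_le_contravar; lra. }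
    assert (Hgg : g ^ 2 <= 1/9) by nra.
    assert (HHb : H <= 9/8).
    { apply Rle_trans with (1 := HH2 Hg).
      replace (9/8) with (/ (1 - 1/9)) by field.
      apply Rinv_le_contravar; lra. }
    assert (HF : c * g * H <= 3/8).
    { assert (0 <= c * g) by nra. nra. }
    assert (HF2 : c * g * H / m <= 3/8).
    { unfold Rdiv. assert (0 <= c * g * H) by (apply Rmult_le_pos; [apply Rmult_le_pos|]; lra).
      assert (/ m <= 1). { rewrite <- Rinv_1. apply Rinv_le_contravar; lra. }
      assert (0 < / m) by (apply Rinv_0_lt_compat; lra). nra. }
    apply Rle_trans with (1/2 * (1 - 1/D) + 1/8).
    { apply Rplus_le_compat_l, Rmin_l. }
    apply Rmult_le_reg_r with (1 - (D + 1) * g); auto.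
    replace ((1 - c * g * H / m) / (1 - (D + 1) * g) * (1 - (D + 1) * g)) with (1 - c * g * H / m) by (field; lra).
    assert (1 / D > 0) by (unfold Rdiv; rewrite Rmult_1_l; apply Rinv_0_lt_compat; lra).
    assert (HN : (1/2 * (1 - 1/D)) * (1 - (D + 1) * g) + 1/8 <= 1 - c * g * H / m).
    { assert (H1D : 1 / D * D = 1) by (field; lra).
      assert (0 <= 1/D * g) by nra.
      nra. }
    assert (1/8 * (1 - (D + 1) * g) <= 1/8) by nra.
    lra.
  -
    set (L := c / (2 * D * m)).
    apply Rle_trans with (1/2 * (1 - 1/D) + L).
    { apply Rplus_le_compat_l, Rmin_r. }
    assert (HcgH : c * g * H <= c * g).
    { assert (c * g < 0) by nra. nra. }
    apply Rmult_le_reg_r with (1 - (D + 1) * g); auto.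
    replace ((1 - c * g * H / m) / (1 - (D + 1) * g) * (1 - (D + 1) * g)) with (1 - c * g * H / m) by (field; lra).
    set (A := (D + 1) / (2 * D) - c / (2 * D * m)).
    assert (Hid : 1 - c * g / m - (1/2 * (1 - 1/D) + L) * (1 - (D + 1) * g)
                  = A * (1 + (D - 1) * g)).
    { unfold A, L, m. field. lra. }
    assert (HA : 0 <= A).
    { unfold A. assert (c / (2 * D * m) <= 1 / (2 * D)).
      { unfold Rdiv. rewrite !Rinv_mult.
        assert (0 < /2) by lra. assert (0 < / D) by (apply Rinv_0_lt_compat; lra).
        assert (0 < / m <= 1). { split. apply Rinv_0_lt_compat; lra.
           rewrite <- Rinv_1. apply Rinv_le_contravar; lra. }
        assert (0 < /2 * /D) by nra.
        assert (c * / m <= 1) by nra. nra. }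
      assert ((D + 1) / (2 * D) = 1/(2*D) + 1/2) by (field; lra). lra. }
    assert (Hg0 : 0 <= 1 + (D - 1) * g).
    { assert (- (1 / (D - 1)) * (D - 1) = -1) by (field; lra). nra. }
    assert (c * g * H / m <= c * g / m).
    { unfold Rdiv. apply Rmult_le_compat_r; auto. left; apply Rinv_0_lt_compat; lra. }
    nra.
Qed.

Lemma Fstar_eq k g : Fstar k g = cst (INR k) * g * hyp2F1 (1/2) (1/2) (INR k / 2 + 1) (g ^ 2).
Proof. unfold Fstar, cst. unfold Rdiv. ring. Qed.

Lemma alpha_bounds d : (2 <= d)%nat ->
  let D := INR d in let c := cst (INR (d * d - 1)) in
  let H0 := hyp2F1 (1/2) (1/2) (INR (d * d - 1) / 2 + 1) ((- (1 / (D - 1))) ^ 2) in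
  exists r, alpha d = Finite r /\
    1/2 * (1 - 1 / D) + Rmin (1/8) (c / (2 * D * (D - 1) ^ 2)) <= r /\
    r <= 1/2 * (1 - 1 / D) + c * H0 / (2 * D * (D - 1) ^ 2) /\
    (D * D - 1) / (D * D) <= c <= 1 /\ 1 <= H0.
Proof. intros Hd D c H0.
  assert (HD : 2 <= D) by (unfold D; replace 2 with (INR 2) by (simpl; lra); apply le_INR; auto).
  assert (HK : INR (d * d - 1) = D * D - 1).
  { rewrite minus_INR, mult_INR; [simpl; unfold D; ring|]. 
    apply (Nat.le_trans _ (1 * 1)); auto. apply Nat.mul_le_mono; lia. }
  assert (Hc : (D * D - 1) / (D * D) <= c <= 1).
  { unfold c. rewrite HK. pose proof (cst_bounds (D * D - 1) ltac:(nra)).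
    replace (D * D - 1 + 1) with (D * D) in H by ring. auto. }
  assert (Hcp : 0 < c).
  { eapply Rlt_le_trans; [|apply Hc]. apply Rdiv_lt_0_compat; nra. }
  assert (Hcc : 5/2 <= INR (d * d - 1) / 2 + 1) by (rewrite HK; nra).
  set (E := fun y => exists g : R, - (1 / (D - 1)) <= g /\ g < 1 / (D + 1) /\
     y = (1 - Fstar (d * d - 1) g / (D - 1) ^ 2) / (1 - (D + 1) * g)).
  assert (Halpha : alpha d = Glb_Rbar E) by reflexivity.
  set (lb := 1/2 * (1 - 1 / D) + Rmin (1/8) (c / (2 * D * (D - 1) ^ 2))).
  assert (Hlb : is_lb_Rbar E lb).
  { intros y [g [Hg1 [Hg2 ->]]]. simpl. rewrite Fstar_eq. fold c.
    assert (Hm1 : - (1 / (D - 1)) >= -1).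
    { assert (1 / (D - 1) <= 1). { unfold Rdiv; rewrite Rmult_1_l. rewrite <- Rinv_1. apply Rinv_le_contravar; lra. } lra. }
    assert (Hp1 : 1 / (D + 1) <= 1/3).
    { unfold Rdiv; rewrite !Rmult_1_l. apply Rinv_le_contravar; lra. }
    apply key_bound; auto.
    - split; [lra | apply Hc].
    - apply hyp_lower; auto. split. apply pow2_ge_0. nra.
    - intros Hg0. apply hyp_upper; auto. split. apply pow2_ge_0. nra. }
  set (g0 := - (1 / (D - 1))).
  set (y0 := 1/2 * (1 - 1 / D) + c * H0 / (2 * D * (D - 1) ^ 2)).
  assert (HH0 : 1 <= H0).
  { unfold H0. apply hyp_lower; auto. split. apply pow2_ge_0.
    assert (1 / (D - 1) <= 1). { unfold Rdiv; rewrite Rmult_1_l. rewrite <- Rinv_1. apply Rinv_le_contravar; lra. }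
    assert (0 < 1 / (D - 1)) by (apply Rdiv_lt_0_compat; lra). nra. }
  assert (Hy0 : E y0).
  { exists g0. split; [unfold g0; lra|]. split.
    { unfold g0. assert (0 < 1 / (D - 1)) by (apply Rdiv_lt_0_compat; lra).
      assert (0 < 1 / (D + 1)) by (apply Rdiv_lt_0_compat; lra). lra. }
    rewrite Fstar_eq. fold c. unfold y0, H0, g0. field. lra. }
  destruct (Glb_Rbar_correct E) as [Hl1 Hl2].
  pose proof (Hl2 lb Hlb) as A1. pose proof (Hl1 y0 Hy0) as A2.
  rewrite <- Halpha in A1, A2.
  destruct (alpha d) as [r| |]; simpl in A1, A2; try contradiction.
  exists r. repeat split; auto; apply Hc.
Qed.

Lemma lim_aux : is_lim_seq (fun n => 1 + 6 * / INR n) 1.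
Proof.
  replace (Finite 1) with (Finite (1 + 6 * 0)) by (f_equal; ring).
  apply (is_lim_seq_plus' (fun _ => 1) (fun n => 6 * / INR n) 1 (6 * 0)).
  apply is_lim_seq_const.
  apply (is_lim_seq_scal_l (fun n => / INR n) 6 0).
  change (is_lim_seq (fun n => / INR n) (Rbar_inv p_infty)).
  apply is_lim_seq_inv; [apply is_lim_seq_INR | discriminate].
Qed.

Theorem theorem1 :
  (forall d : nat, (2 <= d)%nat ->
     Rbar_lt (Finite (1/2 * (1 - 1 / INR d))) (alpha d)) /\
  is_lim_seq
    (fun d : nat => 2 * INR d ^ 3 * (real (alpha d) - 1/2 * (1 - 1 / INR d)))
    (Finite 1).
Proof.
  split.
  - intros d Hd. destruct (alpha_bounds d Hd) as [r [Hr [Hr1 [_ [Hc _]]]]].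
    rewrite Hr. simpl.
    set (D := INR d) in *.
    assert (HD : 2 <= D) by (unfold D; replace 2 with (INR 2) by (simpl; lra); apply le_INR; auto).
    assert (0 < cst (INR (d * d - 1))).
    { eapply Rlt_le_trans; [|apply Hc]. apply Rdiv_lt_0_compat; nra. }
    assert (0 < Rmin (1/8) (cst (INR (d * d - 1)) / (2 * D * (D - 1) ^ 2))).
    { apply Rmin_glb_lt. lra. apply Rdiv_lt_0_compat; auto.
      apply Rmult_lt_0_compat; [lra| apply pow_lt; lra]. }
    lra.
  - apply is_lim_seq_le_le_loc with (fun _ => 1) (fun n => 1 + 6 * / INR n).
    2: apply is_lim_seq_const. 2: apply lim_aux.
    exists 3%nat. intros d Hd.
    destruct (alpha_bounds d ltac:(lia)) as [r [Hr [Hr1 [Hr2 [Hc HH0]]]]].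
    rewrite Hr. simpl.
    set (D := INR d) in *.
    assert (HD : 3 <= D) by (unfold D; replace 3 with (INR 3) by (simpl; lra); apply le_INR; auto).
    set (c := cst (INR (d * d - 1))) in *.
    set (H0 := hyp2F1 (1 / 2) (1 / 2) (INR (d * d - 1) / 2 + 1) ((- (1 / (D - 1))) ^ 2)) in *.
    set (m := (D - 1) ^ 2) in *.
    assert (Hm : m = D * D - 2 * D + 1) by (unfold m; ring).
    assert (Hm4 : 4 <= m) by nra.
    assert (Hcp : 0 < c).
    { eapply Rlt_le_trans; [|apply Hc]. apply Rdiv_lt_0_compat; nra. }
    assert (HL : c / (2 * D * m) <= 1/8).
    { apply Rmult_le_reg_r with (2 * D * m). nra.
      replace (c / (2 * D * m) * (2 * D * m)) with c by (field; nra). nra. }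
    rewrite Rmin_right in Hr1 by lra.
    assert (HcD : m <= D * D * c).
    { destruct Hc as [Hc1 Hc2].
      apply Rmult_le_compat_l with (r := D * D) in Hc1; [|nra].
      replace (D * D * ((D * D - 1) / (D * D))) with (D * D - 1) in Hc1 by (field; lra). nra. }
    assert (HHu : H0 <= m / (m - 1)).
    { unfold H0.
      replace (m / (m - 1)) with (/ (1 - / m)) by (field; lra).
      replace ((- (1 / (D - 1))) ^ 2) with (/ m) by (unfold m; field; lra).
      apply hyp_upper.
      - replace (INR (d * d - 1)) with (D * D - 1).
        2:{ rewrite minus_INR, mult_INR; [simpl; unfold D; ring|].
            apply (Nat.le_trans _ (1 * 1)); auto. apply Nat.mul_le_mono; lia. }
        nra.
      - split. left; apply Rinv_0_lt_compat; lra.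
        rewrite <- Rinv_1. apply Rinv_lt_contravar; lra.
      }
    set (t := 1 / 2 * (1 - 1 / D)) in *.
    assert (HD3 : 0 < 2 * D ^ 3) by (apply Rmult_lt_0_compat; [lra| apply pow_lt; lra]).
    assert (E1 : 2 * D ^ 3 * (c / (2 * D * m)) = D * D * c / m) by (field; lra).
    assert (E2 : 2 * D ^ 3 * (c * H0 / (2 * D * m)) = D * D * c * H0 / m) by (field; lra).
    assert (L1 : 1 <= D * D * c / m).
    { apply Rmult_le_reg_r with m; [lra|]. replace (D * D * c / m * m) with (D * D * c) by (field; lra). lra. }
    assert (U1 : D * D * c * H0 / m <= 1 + 6 * / D).
    { assert (HmD : m - 1 = D * (D - 2)) by (rewrite Hm; ring).
      assert (D * D * c * H0 <= D * D * (m / (m - 1))).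
      { assert (0 <= D * D) by nra. assert (c * H0 <= 1 * (m / (m - 1))).
        { apply Rmult_le_compat; lra. } nra. }
      apply Rmult_le_reg_r with m; [lra|].
      replace (D * D * c * H0 / m * m) with (D * D * c * H0) by (field; lra).
      eapply Rle_trans; [exact H|].
      rewrite HmD. replace (D * D * (m / (D * (D - 2)))) with (D * m / (D - 2)) by (field; lra).
      apply Rmult_le_reg_r with (D * (D - 2)); [nra|].
      replace (D * m / (D - 2) * (D * (D - 2))) with (D * D * m) by (field; lra).
      replace ((1 + 6 * / D) * m * (D * (D - 2))) with (m * ((D + 6) * (D - 2))) by (field; lra).
      nra. }
    split.
    + rewrite <- E1 in L1. eapply Rle_trans; [exact L1|].
      apply Rmult_le_compat_l; lra.
    + rewrite <- E2 in U1. eapply Rle_trans; [|exact U1].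
      apply Rmult_le_compat_l; lra.
Qed.
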